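(* Let $P_1$ be a $C_\pi$ process and suppose $P_1\xrightarrow{\alpha_1}P_2\xrightarrow{\alpha_2}\cdots\xrightarrow{\alpha_m}P_{m+1}$, where all bound outputs are chosen fresh. Suppose that for some $i\in\{1,\dots,m-1\}$ we have $\alpha_i=k(l)$ and $l\notin\mathrm{fo}(P_i)$. Then $\alpha_j\neq\overline{k'}\langle l\rangle$ for every channel $k'$ and every $j=i+1,\dots,m$.
   Context: The Confidential $\pi$-calculus $C_\pi$. There are two disjoint countable sets: ${\cal V}$ of variables (ranged over by $x,y,z,\dots$) and ${\cal C}$ of channels (ranged over by $k,l,m,n,\dots$). Let ${\cal N}={\cal V}\cup{\cal C}$, ranged over by $a,b,c,\dots$. Prefixes: $\pi ::= \overline{a}\langle k\rangle \mid a(x) \mid [a=b]\pi$. Processes: $P ::= 0 \mid \pi.P \mid P\,|\,P \mid (\nu k)P \mid\, !P$. The object of an output is always a channel, and the bound object of an input is always a variable. In $(\nu k)P$ the channel $k$ is bound, and in $a(x).P$ the variable $x$ is bound, with scope $P$. The sets $\mathrm{fn}(P)$, $\mathrm{bn}(P)$ and $\mathrm{n}(P)$ are the free, bound and all names of $P$. The set $\mathrm{fo}(P)$ consists of the free channels of $P$ that occur as objects of output prefixes in $P$. Processes are identified up to $\alpha$-conversion. Actions: $\alpha ::= \overline{k}\langle l\rangle \mid k(l) \mid (\nu l)\overline{k}\langle l\rangle \mid \tau$, where $k,l$ are channels. We have $\mathrm{fn}(\overline{k}\langle l\rangle)=\mathrm{fn}(k(l))=\{k,l\}$, $\mathrm{fn}((\nu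 l)\overline{k}\langle l\rangle)=\{k\}$, $\mathrm{bn}((\nu l)\overline{k}\langle l\rangle)=\{l\}$, all other bound-name sets are empty, $\mathrm{fn}(\tau)=\emptyset$, and $\mathrm{n}(\alpha)=\mathrm{fn}(\alpha)\cup\mathrm{bn}(\alpha)$. The labelled transition relation $\xrightarrow{\alpha}$ is the least relation closed under the following rules: - (out) $\overline{k}\langle l\rangle.P \xrightarrow{\overline{k}\langle l\rangle} P$. - (in) $k(x).P \xrightarrow{k(l)} P\{l/x\}$ for every channel $l$. - (match) If $\pi.P\xrightarrow{\alpha}P'$, then $[a=a]\pi.P\xrightarrow{\alpha}P'$. - (res) If $P\xrightarrow{\alpha}P'$ and $k\notin \mathrm{n}(\alpha)$, then $(\nu k)P\xrightarrow{\alpha}(\nu k)P'$. - (open) If $P\xrightarrow{\overline{k}\langle l\rangle}Q$ and $k\neq l$, then $(\nu l)P\xrightarrow{(\nu l)\overline{k}\langle l\rangle}Q$. - (par-l) If $P\xrightarrow{\alpha}Q$ and $\mathrm{bn}(\alpha)\cap\mathrm{fn}(R)=\emptyset$, then $P|R\xrightarrow{\alpha}Q|R$. - (comm-l) If $P\xrightarrow{\overline{k}\langle l\rangle}P'$ and $Q\xrightarrow{k(l)}Q'$, then $P|Q\xrightarrow{\tau}P'|Q'$. - (close-l) If $P\xrightarrow{(\nu l)\overline{k}\langle l\rangle}P'$, $Q\xrightarrow{k(l)}Q'$ and $l\notin\mathrm{fn}(Q)$, then $P|Q\xrightarrow{\tau}(\nu l)(P'|Q')$. - The symmetric rules (par-r),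 (comm-r), (close-r). - (rep-act) If $P\xrightarrow{\alpha}P'$, then $!P\xrightarrow{\alpha}P'|!P$. - (rep-comm) If $P\xrightarrow{\overline{k}\langle l\rangle}P'$ and $P\xrightarrow{k(l)}P''$, then $!P\xrightarrow{\tau}(P'|P'')|!P$. - (rep-close) If $P\xrightarrow{(\nu l)\overline{k}\langle l\rangle}P'$, $P\xrightarrow{k(l)}P''$ and $l\notin\mathrm{fn}(P)$, then $!P\xrightarrow{\tau}(\nu l)(P'|P'')|!P$. *)

(* Defs.v *)
(* Locally nameless encoding of the Confidential pi-calculus C_pi:
   alpha-conversion is built in (bound channels / bound variables are de Bruijn
   indices; free channels / free variables are named by nat). *)
From Stdlib Require Import Arith List Bool.
Import ListNotations.

(* channels: free channel k, or bound channel (index of an enclosing nu) *)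
Inductive chan : Type := CF (k : nat) | CB (i : nat).
(* variables: free variable x, or bound variable (index of an enclosing input) *)
Inductive var : Type := VF (x : nat) | VB (i : nat).
Inductive name : Type := NC (c : chan) | NV (v : var).

(* prefixes: output a<c> (object always a channel), input a(x) (binder, nameless),
   match [a=b]pi *)
Inductive prefix : Type :=
| POut (a : name) (c : chan)
| PIn (a : name)
| PMatch (a b : name) (p : prefix).

Inductive proc : Type :=
| Nil
| Pre (p : prefix) (P : proc)
| Par (P Q : proc)
| Nu (P : proc)
| Bang (P : proc).

Fixpoint binds (p : prefix) : bool :=
  match p with
  | POut _ _ => false
  | PIn _ => true
  | PMatch _ _ q => binds q
  end.

(* ---------- opening a bound channel with a free channel l ---------- *)
Definition oc_chan (n l : nat) (c : chan) : chan :=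
  match c with CB i => if Nat.eqb i n then CF l else c | CF _ => c end.
Definition oc_name (n l : nat) (a : name) : name :=
  match a with NC c => NC (oc_chan n l c) | NV _ => a end.
Fixpoint oc_pre (n l : nat) (p : prefix) : prefix :=
  match p with
  | POut a c => POut (oc_name n l a) (oc_chan n l c)
  | PIn a => PIn (oc_name n l a)
  | PMatch a b q => PMatch (oc_name n l a) (oc_name n l b) (oc_pre n l q)
  end.
Fixpoint oc (n l : nat) (P : proc) : proc :=
  match P with
  | Nil => Nil
  | Pre p Q => Pre (oc_pre n l p) (oc n l Q)
  | Par Q R => Par (oc n l Q) (oc n l R)
  | Nu Q => Nu (oc (S n) l Q)
  | Bang Q => Bang (oc n l Q)
  end.

(* ---------- closing: abstract the free channel l as bound index n ---------- *)
Definition cc_chan (n l : nat) (c : chan) : chan :=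
  match c with CF k => if Nat.eqb k l then CB n else c | CB _ => c end.
Definition cc_name (n l : nat) (a : name) : name :=
  match a with NC c => NC (cc_chan n l c) | NV _ => a end.
Fixpoint cc_pre (n l : nat) (p : prefix) : prefix :=
  match p with
  | POut a c => POut (cc_name n l a) (cc_chan n l c)
  | PIn a => PIn (cc_name n l a)
  | PMatch a b q => PMatch (cc_name n l a) (cc_name n l b) (cc_pre n l q)
  end.
Fixpoint cc (n l : nat) (P : proc) : proc :=
  match P with
  | Nil => Nil
  | Pre p Q => Pre (cc_pre n l p) (cc n l Q)
  | Par Q R => Par (cc n l Q) (cc n l R)
  | Nu Q => Nu (cc (S n) l Q)
  | Bang Q => Bang (cc n l Q)
  end.

(* ---------- substitution P{l/x} of the bound variable with index n by channel l ---------- *)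
Definition ov_name (n l : nat) (a : name) : name :=
  match a with
  | NV (VB i) => if Nat.eqb i n then NC (CF l) else a
  | _ => a
  end.
Fixpoint ov_pre (n l : nat) (p : prefix) : prefix :=
  match p with
  | POut a c => POut (ov_name n l a) c
  | PIn a => PIn (ov_name n l a)
  | PMatch a b q => PMatch (ov_name n l a) (ov_name n l b) (ov_pre n l q)
  end.
Fixpoint ov (n l : nat) (P : proc) : proc :=
  match P with
  | Nil => Nil
  | Pre p Q => Pre (ov_pre n l p) (ov (if binds p then S n else n) l Q)
  | Par Q R => Par (ov n l Q) (ov n l R)
  | Nu Q => Nu (ov n l Q)
  | Bang Q => Bang (ov n l Q)
  end.

Definition lc_chan (nc : nat) (c : chan) : bool :=
  match c with CB i => Nat.ltb i nc | CF _ => true end.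
Definition lc_name (nc nv : nat) (a : name) : bool :=
  match a with
  | NC c => lc_chan nc c
  | NV (VB i) => Nat.ltb i nv
  | NV (VF _) => true
  end.
Fixpoint lc_pre (nc nv : nat) (p : prefix) : bool :=
  match p with
  | POut a c => lc_name nc nv a && lc_chan nc c
  | PIn a => lc_name nc nv a
  | PMatch a b q => lc_name nc nv a && lc_name nc nv b && lc_pre nc nv q
  end.
Fixpoint lc_at (nc nv : nat) (P : proc) : bool :=
  match P with
  | Nil => true
  | Pre p Q => lc_pre nc nv p && lc_at nc (if binds p then S nv else nv) Q
  | Par Q R => lc_at nc nv Q && lc_at nc nv R
  | Nu Q => lc_at (S nc) nv Q
  | Bang Q => lc_at nc nv Q
  end.
Definition lc (P : proc) : bool := lc_at 0 0 P.

(* ---------- free channels fn(P) (channels only; free variables are never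
   relevant to action names) ---------- *)
Definition chan_is (l : nat) (c : chan) : bool :=
  match c with CF k => Nat.eqb k l | CB _ => false end.
Definition name_is (l : nat) (a : name) : bool :=
  match a with NC c => chan_is l c | NV _ => false end.
Fixpoint pre_fn (l : nat) (p : prefix) : bool :=
  match p with
  | POut a c => name_is l a || chan_is l c
  | PIn a => name_is l a
  | PMatch a b q => name_is l a || name_is l b || pre_fn l q
  end.
Fixpoint in_fn (l : nat) (P : proc) : bool :=
  match P with
  | Nil => false
  | Pre p Q => pre_fn l p || in_fn l Q
  | Par Q R => in_fn l Q || in_fn l R
  | Nu Q => in_fn l Q
  | Bang Q => in_fn l Q
  end.

(* ---------- fo(P): free channels occurring as objects of output prefixes ---------- *)
Fixpoint pre_fo (l : nat) (p : prefix) : bool :=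
  match p with
  | POut _ c => chan_is l c
  | PIn _ => false
  | PMatch _ _ q => pre_fo l q
  end.
Fixpoint in_fo (l : nat) (P : proc) : bool :=
  match P with
  | Nil => false
  | Pre p Q => pre_fo l p || in_fo l Q
  | Par Q R => in_fo l Q || in_fo l R
  | Nu Q => in_fo l Q
  | Bang Q => in_fo l Q
  end.

Inductive act : Type :=
| AOut (k l : nat)
| AIn (k l : nat)
| ABOut (k l : nat)    (* (nu l) k-bar<l> *)
| ATau.

Definition act_fn (a : act) : list nat :=
  match a with
  | AOut k l => [k; l] | AIn k l => [k; l] | ABOut k _ => [k] | ATau => []
  end.
Definition act_bn (a : act) : list nat :=
  match a with ABOut _ l => [l] | _ => [] end.
Definition act_n (a : act) : list nat := act_fn a ++ act_bn a.

Inductive trans : proc -> act -> proc -> Prop :=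
| t_out : forall k l P,
    trans (Pre (POut (NC (CF k)) (CF l)) P) (AOut k l) P
| t_in : forall k l P,
    trans (Pre (PIn (NC (CF k))) P) (AIn k l) (ov 0 l P)
| t_match : forall a p P al P',
    trans (Pre p P) al P' -> trans (Pre (PMatch a a p) P) al P'
| t_res : forall P al k P',
    (* (nu k)P with k chosen (by alpha-conversion) not free in the body *)
    in_fn k P = false -> ~ In k (act_n al) ->
    trans (oc 0 k P) al P' -> trans (Nu P) al (Nu (cc 0 k P'))
| t_open : forall P k l Q,
    in_fn l P = false -> k <> l ->
    trans (oc 0 l P) (AOut k l) Q -> trans (Nu P) (ABOut k l) Q
| t_parl : forall P Q R al,
    trans P al Q -> (forall l, In l (act_bn al) -> in_fn l R = false) ->
    trans (Par P R) al (Par Q R)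
| t_parr : forall P Q R al,
    trans P al Q -> (forall l, In l (act_bn al) -> in_fn l R = false) ->
    trans (Par R P) al (Par R Q)
| t_comml : forall P P' Q Q' k l,
    trans P (AOut k l) P' -> trans Q (AIn k l) Q' ->
    trans (Par P Q) ATau (Par P' Q')
| t_commr : forall P P' Q Q' k l,
    trans P (AIn k l) P' -> trans Q (AOut k l) Q' ->
    trans (Par P Q) ATau (Par P' Q')
| t_closel : forall P P' Q Q' k l,
    trans P (ABOut k l) P' -> trans Q (AIn k l) Q' -> in_fn l Q = false ->
    trans (Par P Q) ATau (Nu (cc 0 l (Par P' Q')))
| t_closer : forall P P' Q Q' k l,
    trans P (AIn k l) P' -> trans Q (ABOut k l) Q' -> in_fn l P = false ->
    trans (Par P Q) ATau (Nu (cc 0 l (Par P' Q')))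
| t_repact : forall P al P',
    trans P al P' -> trans (Bang P) al (Par P' (Bang P))
| t_repcomm : forall P P' P'' k l,
    trans P (AOut k l) P' -> trans P (AIn k l) P'' ->
    trans (Bang P) ATau (Par (Par P' P'') (Bang P))
| t_repclose : forall P P' P'' k l,
    trans P (ABOut k l) P' -> trans P (AIn k l) P'' -> in_fn l P = false ->
    trans (Bang P) ATau (Par (Nu (cc 0 l (Par P' P''))) (Bang P)).

(* Main.v *)
Require Import Defs.
From Stdlib Require Import Arith List Bool Lia.

Ltac rw H := rewrite H; simpl; rewrite ?orb_true_r; auto.

Lemma chan_oc x n k c : chan_is x (oc_chan n k c) = true -> x = k \/ chan_is x c = true.
Proof. destruct c; simpl; auto. destruct (Nat.eqb i n); simpl; auto.
  intro H; apply Nat.eqb_eq in H; auto. Qed.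

Lemma pre_oc x n k p : pre_fo x (oc_pre n k p) = true -> x = k \/ pre_fo x p = true.
Proof. induction p; simpl; intros; try discriminate; eauto using chan_oc. Qed.

Lemma fo_oc x P : forall n k, in_fo x (oc n k P) = true -> x = k \/ in_fo x P = true.
Proof. induction P; simpl; intros n k H; try discriminate; eauto.
  - apply orb_true_iff in H as [H|H].
    + destruct (pre_oc _ _ _ _ H); auto. rewrite H0; auto.
    + destruct (IHP _ _ H); auto. rw H0.
  - apply orb_true_iff in H as [H|H].
    + destruct (IHP1 _ _ H); auto. rewrite H0; auto.
    + destruct (IHP2 _ _ H); auto. rw H0.
Qed.

Lemma chan_cc x n k c : chan_is x (cc_chan n k c) = true -> x <> k /\ chan_is x c = true.
Proof. destruct c; simpl; try discriminate.
  destruct (Nat.eqb k0 k) eqn:E; simpl; try discriminate.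
  intro H; split; auto. apply Nat.eqb_eq in H; apply Nat.eqb_neq in E; subst; auto. Qed.

Lemma pre_cc x n k p : pre_fo x (cc_pre n k p) = true -> x <> k /\ pre_fo x p = true.
Proof. induction p; simpl; intros; try discriminate; eauto using chan_cc. Qed.

Lemma fo_cc x P : forall n k, in_fo x (cc n k P) = true -> x <> k /\ in_fo x P = true.
Proof. induction P; simpl; intros n k H; try discriminate; eauto.
  - apply orb_true_iff in H as [H|H].
    + destruct (pre_cc _ _ _ _ H); rewrite H1; auto.
    + destruct (IHP _ _ H); rw H1.
  - apply orb_true_iff in H as [H|H].
    + destruct (IHP1 _ _ H); rewrite H1; auto.
    + destruct (IHP2 _ _ H); rw H1.
Qed.

Lemma pre_ov x n l p : pre_fo x (ov_pre n l p) = pre_fo x p.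
Proof. induction p; simpl; auto. Qed.

Lemma fo_ov x P : forall n l, in_fo x (ov n l P) = in_fo x P.
Proof. induction P; simpl; intros; auto.
  rewrite pre_ov, IHP; auto. rewrite IHP1, IHP2; auto. Qed.

Lemma out_fo P al P' : trans P al P' -> forall k x, al = AOut k x -> in_fo x P = true.
Proof. induction 1; intros k0 x E; try discriminate; simpl.
  - inversion E; subst. rewrite Nat.eqb_refl; auto.
  - specialize (IHtrans _ _ E). simpl in IHtrans.
    apply orb_true_iff in IHtrans as [H1|H1]; rw H1.
  - subst. destruct (fo_oc _ _ _ _ (IHtrans _ _ eq_refl)); auto.
    subst. exfalso; apply H0; simpl; auto.
  - rewrite (IHtrans _ _ E); auto.
  - rewrite (IHtrans _ _ E), orb_true_r; auto.
  - eauto.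
Qed.

Lemma fo_step P al P' : trans P al P' -> forall x, in_fo x P' = true ->
  in_fo x P = true \/ exists k, al = ABOut k x.
Proof. induction 1; intros x Hx; simpl in *.
  - rw Hx.
  - rewrite fo_ov in Hx; auto.
  - destruct (IHtrans _ Hx) as [H1|H1]; auto.
  - destruct (fo_cc _ _ _ _ Hx) as [Hne Hx'].
    destruct (IHtrans _ Hx') as [H2|H2]; auto.
    destruct (fo_oc _ _ _ _ H2); auto; congruence.
  - destruct (IHtrans _ Hx) as [H2|[? H2]]; try discriminate.
    destruct (fo_oc _ _ _ _ H2); subst; eauto.
  - apply orb_true_iff in Hx as [H1|H1].
    + destruct (IHtrans _ H1) as [H2|H2]; auto. rewrite H2; auto.
    + rw H1.
  - apply orb_true_iff in Hx as [H1|H1].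
    + rewrite H1; auto.
    + destruct (IHtrans _ H1) as [H2|H2]; auto. rw H2.
  - apply orb_true_iff in Hx as [H1|H1].
    + destruct (IHtrans1 _ H1) as [H2|[? H2]]; try discriminate. rewrite H2; auto.
    + destruct (IHtrans2 _ H1) as [H2|[? H2]]; try discriminate. rw H2.
  - apply orb_true_iff in Hx as [H1|H1].
    + destruct (IHtrans1 _ H1) as [H2|[? H2]]; try discriminate. rewrite H2; auto.
    + destruct (IHtrans2 _ H1) as [H2|[? H2]]; try discriminate. rw H2.
  - apply orb_true_iff in Hx as [G1|G1]; apply fo_cc in G1 as [Hne G1].
    + destruct (IHtrans1 _ G1) as [H2|[? H2]]; [rw H2| inversion H2; congruence].
    + destruct (IHtrans2 _ G1) as [H2|[? H2]]; try discriminate. rw H2.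
  - apply orb_true_iff in Hx as [G1|G1]; apply fo_cc in G1 as [Hne G1].
    + destruct (IHtrans1 _ G1) as [H2|[? H2]]; try discriminate. rw H2.
    + destruct (IHtrans2 _ G1) as [H2|[? H2]]; [rw H2| inversion H2; congruence].
  - apply orb_true_iff in Hx as [G1|G1]; [destruct (IHtrans _ G1) as [H2|H2]; auto | auto].
  - apply orb_true_iff in Hx as [G1|G1]; [|auto].
    apply orb_true_iff in G1 as [G1|G1].
    + destruct (IHtrans1 _ G1) as [H2|[? H2]]; try discriminate; auto.
    + destruct (IHtrans2 _ G1) as [H2|[? H2]]; try discriminate; auto.
  - apply orb_true_iff in Hx as [G1|G1]; [|auto].
    apply orb_true_iff in G1 as [G3|G3]; apply fo_cc in G3 as [Hne G3].
    + destruct (IHtrans1 _ G3) as [H2|[? H2]]; [auto| inversion H2; congruence].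
    + destruct (IHtrans2 _ G3) as [H2|[? H2]]; try discriminate; auto.
Qed.

Theorem theorem1 (m : nat) (P : nat -> proc) (a : nat -> act) :
  lc (P 1) = true ->
  (* the run P_1 --a_1--> P_2 ... --a_m--> P_(m+1) *)
  (forall j, 1 <= j <= m -> trans (P j) (a j) (P (S j))) ->
  (* all bound outputs are chosen fresh *)
  (forall j k l, 1 <= j <= m -> a j = ABOut k l ->
     (forall h, 1 <= h <= j -> in_fn l (P h) = false) /\
     (forall h, 1 <= h < j -> ~ In l (act_n (a h)))) ->
  forall i k l, 1 <= i <= m - 1 -> a i = AIn k l -> in_fo l (P i) = false ->
  forall j k', i + 1 <= j <= m -> a j <> AOut k' l.
Proof.
  intros _ Htr Hfr i k l Hi Hai Hfo.
  assert (Hinv : forall n, i + 1 + n <= m + 1 -> in_fo l (P (i + 1 + n)) = false).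
  { induction n; intro Hn.
    - rewrite Nat.add_0_r. destruct (in_fo l (P (i+1))) eqn:E; auto.
      replace (i+1) with (S i) in E by lia.
      destruct (fo_step _ _ _ (Htr i ltac:(lia)) _ E) as [H|[? H]]; congruence.
    - destruct (in_fo l (P (i + 1 + S n))) eqn:E; auto.
      replace (i + 1 + S n) with (S (i+1+n)) in E by lia.
      destruct (fo_step _ _ _ (Htr (i+1+n) ltac:(lia)) _ E) as [H|[k0 H]].
      + rewrite IHn in H by lia; discriminate.
      + destruct (Hfr (i+1+n) _ _ ltac:(lia) H) as [_ H2].
        exfalso; apply (H2 i ltac:(lia)). rewrite Hai; simpl; auto. }
  intros j k' Hj E.
  pose proof (out_fo _ _ _ (Htr j ltac:(lia)) _ _ E).
  replace j with (i + 1 + (j - i - 1)) in H by lia.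
  rewrite Hinv in H by lia; discriminate.
Qed.
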